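(* Let $P(x)=L(Ax)+\frac{\lambda}{2}\|x\|^2$ where $L:\mathbb{R}^n\to\mathbb{R}$ is convex, $A\in\mathbb{R}^{n\times d}$ and $\lambda>0$. Then for every $S\in V$ and every $\beta\in\mathbb{R}^n$ with $L^*(\beta)<\infty$, $$F(S)\ \ge\ D(\beta;S):=-L^*(\beta)-\frac{1}{2\lambda}\|A_S^\top\beta\|^2-\frac{1}{2\lambda}\|A_{S_>}^\top\beta\|_{k-|S|,2}^2 .$$
   Context: Let $d,k$ be positive integers with $k\le d$, and $[d]=\{1,\dots,d\}$ with its usual order. For nonempty $S\subseteq[d]$, $\max S$ is its largest element; set $\max\emptyset=0$. For $x\in\mathbb{R}^d$, $\mathrm{supp}(x)=\{i: x_i\neq0\}$. The state-space tree $G=(V,E)$: $V=\{S\subseteq[d]: |S|\le k \text{ and } k-|S|\le d-\max S\}$, with a directed edge $(S,T)\in E$ for $S,T\in V$ iff $T\neq\emptyset$ and $S=T\setminus\{\max T\}$. For $S\in V$, $\mathrm{desc}(S)$ is the set consisting of $S$ and all its descendants in $G$, $U(S)=\{x\in\mathbb{R}^d: \mathrm{supp}(x)\subseteq S' \text{ for some } S'\in\mathrm{desc}(S)\}$, $F(S)=\inf\{P(x): x\in U(S)\}$, and $S_>=\{i\in[d]: i>\max S\}$. $\|\cdot\|$ is the Euclidean norm. For $S\subseteq[d]$, $A_S$ is the submatrix of $A$ with columns indexed by $S$ (so $A_S^\top\beta\in\mathbb{R}^{|S|}$). For $z\in\mathbb{R}^m$ and integer $j\ge0$, $\|z\|_{j,2}$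 is the Euclidean norm of the vector obtained from $z$ by keeping (up to) $j$ entries of largest absolute value and setting the others to $0$ (so $\|z\|_{0,2}=0$). $L^*(\beta)=\sup_{y\in\mathbb{R}^n}\{\langle\beta,y\rangle-L(y)\}$ is the convex conjugate. *)

(* Defs.v *)
(* scalars in an arbitrary R : realFieldType (the statement is
   purely order-algebraic, so this generalises the real-number case). *)
From HB Require Import structures.
From mathcomp Require Import all_boot all_order all_algebra.
Set Implicit Arguments. Unset Strict Implicit. Unset Printing Implicit Defensive.
Import Order.TTheory GRing.Theory Num.Theory.
Local Open Scope ring_scope.

(* Index i : 'I_d represents the coordinate i+1 of [d] = {1,..,d}. *)

(* max S (1-based), with max of the empty set = 0 *)
Definition smax (d : nat) (S : {set 'I_d}) : nat := (\max_(i in S) i.+1)%N.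

Definition inV (d k : nat) (S : {set 'I_d}) : bool :=
  (#|S| <= k)%N && (k - #|S| <= d - smax S)%N.

Definition drop_max (d : nat) (T : {set 'I_d}) : {set 'I_d} :=
  [set i in T | i.+1 != smax T].

Definition tree_edge (d k : nat) : rel {set 'I_d} :=
  fun S T => [&& inV k S, inV k T, T != set0 & S == drop_max T].

Definition desc (d k : nat) (S : {set 'I_d}) : {set {set 'I_d}} :=
  [set T | connect (@tree_edge d k) S T].

Definition Sgt (d : nat) (S : {set 'I_d}) : {set 'I_d} :=
  [set i : 'I_d | (smax S < i.+1)%N].

Definition inU {R : realFieldType} (d k : nat) (S : {set 'I_d}) (x : 'cV[R]_d) : Prop :=
  exists2 S', S' \in desc k S & forall i : 'I_d, x i 0 != 0 -> i \in S'.

Definition dotv {R : realFieldType} (n : nat) (u v : 'cV[R]_n) : R :=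
  \sum_(i < n) u i 0 * v i 0.

Definition sqnorm {R : realFieldType} (n : nat) (u : 'cV[R]_n) : R :=
  \sum_(i < n) u i 0 ^+ 2.

Definition sqnorm_on {R : realFieldType} (n : nat) (S : {set 'I_n}) (z : 'cV[R]_n) : R :=
  \sum_(i in S) z i 0 ^+ 2.

Definition topsq {R : realFieldType} (j : nat) (s : seq R) : R :=
  \sum_(a <- take j (sort (fun a b : R => b <= a) [seq `|x| | x <- s])) a ^+ 2.

Definition restr {R : realFieldType} (n : nat) (S : {set 'I_n}) (z : 'cV[R]_n) : seq R :=
  [seq z i 0 | i <- enum S].

Definition convex_fun {R : realFieldType} (n : nat) (L : 'cV[R]_n -> R) : Prop :=
  forall (x y : 'cV[R]_n) (t : R), 0 <= t -> t <= 1 ->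
    L (t *: x + (1 - t) *: y) <= t * L x + (1 - t) * L y.

(* c = L^*(beta) = sup_y (<beta,y> - L y), a finite value (least upper bound) *)
Definition is_conj_value {R : realFieldType} (n : nat) (L : 'cV[R]_n -> R)
    (beta : 'cV[R]_n) (c : R) : Prop :=
  (forall y, dotv beta y - L y <= c) /\
  (forall c', (forall y, dotv beta y - L y <= c') -> c <= c').

Definition inf_ge {R : realFieldType} (T : Type) (P : T -> R) (U : T -> Prop) (D : R) : Prop :=
  forall x, U x -> D <= P x.

(* Main.v *)
Require Import Defs.
From HB Require Import structures.
From mathcomp Require Import all_boot all_order all_algebra.
From mathcomp Require Import zify ring lra.
Import Order.TTheory GRing.Theory Num.Theory.
Set Implicit Arguments. Unset Strict Implicit.
Local Open Scope ring_scope.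
Section S.
Variable R : realFieldType.

Lemma sorted_sub (u t : seq R) m :
  sorted (fun a b : R => b <= a) u -> all (fun a => 0 <= a) u ->
  subseq t u -> (size t <= m)%N ->
  \sum_(a <- t) a ^+ 2 <= \sum_(a <- take m u) a ^+ 2.
Proof.
elim: u t m => [|x u IH] t m srt pos.
  by rewrite subseq0 => /eqP -> _; rewrite big_nil; case: m.
rewrite /=.
case/andP: pos => x0 pos.
have srt' : sorted (fun a b : R => b <= a) u by exact: path_sorted srt.
have allx : all (fun y => y <= x) u.
  have := order_path_min (fun a b c h1 h2 => le_trans h2 h1) srt.
  by [].
case: m => [|m].
  by case: t => //= _ _; rewrite !big_nil.
rewrite big_cons.
case: t => [|y t].
  move=> _ _; rewrite big_nil addr_ge0 ?sqr_ge0 ?sumr_ge0 // => a _; exact: sqr_ge0.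
rewrite big_cons /=.
case: eqP => [-> | _] sub sz.
  by rewrite lerD2l; apply: IH.
have yu : y \in u by apply: (mem_subseq sub); rewrite mem_head.
have yx : y <= x by exact: (allP allx).
have y0 : 0 <= y by exact: (allP pos).
apply: lerD.
  by rewrite ler_pXn2r // nnegrE.
apply: IH => //.
by apply: subseq_trans sub; apply: subseq_cons.
Qed.
End S.

Lemma topsq_sub (R : realFieldType) n (W G : {set 'I_n}) (z : 'cV[R]_n) j :
  W \subset G -> (#|W| <= j)%N ->
  \sum_(i in W) z i 0 ^+ 2 <= topsq j (restr G z).
Proof.
move=> WG Wj.
set le := (fun a b : R => b <= a).
have tot : total le by move=> a b; rewrite /le; case: (leP a b) => h; rewrite ?h ?orbT // ltW.
have tr : transitive le by move=> a b c h1 h2; rewrite /le; exact: le_trans h2 h1.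
rewrite /topsq.
set t0 : seq R := [seq `|x| | x <- restr W z].
have sub : subseq t0 [seq `|x| | x <- restr G z].
  apply: map_subseq; apply: map_subseq.
  rewrite /enum_mem.
  have -> : filter (mem W) (Finite.enum 'I_n) = filter (mem W) (filter (mem G) (Finite.enum 'I_n)).
    rewrite -filter_predI; apply: eq_filter => i /=.
    by case iW: (i \in W) => //=; rewrite (subsetP WG).
  exact: filter_subseq.
have -> : \sum_(i in W) z i 0 ^+ 2 = \sum_(a <- sort le t0) a ^+ 2.
  have pe : perm_eq (sort le t0) t0 by rewrite perm_sort perm_refl.
  rewrite (perm_big _ pe) /t0 /restr big_map big_map big_enum.
  by apply: eq_bigr => i _; rewrite real_normK // num_real.
apply: sorted_sub.
- exact: sort_sorted.
- rewrite all_sort; apply/allP => a /mapP [x _ ->]; exact: normr_ge0.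
- exact: subseq_sort.
- by rewrite size_sort /t0 /restr !size_map -cardE.
Qed.

Lemma smax_sub d (A B : {set 'I_d}) : A \subset B -> (smax A <= smax B)%N.
Proof.
rewrite /smax => AB; apply/bigmax_leqP => i iA.
exact: (leq_bigmax_cond _ (subsetP AB _ iA)).
Qed.

Lemma smax_drop d (y : {set 'I_d}) : y != set0 -> (smax (drop_max y) < smax y)%N.
Proof.
case/set0Pn=> i0 iy.
have pos : (0 < smax y)%N.
  by rewrite /smax; apply: leq_trans (leq_bigmax_cond _ iy).
suff : (smax (drop_max y) <= (smax y).-1)%N by lia.
rewrite {1}/smax; apply/bigmax_leqP => i; rewrite inE => /andP [iy' ne].
have h : (i.+1 <= smax y)%N by rewrite /smax; apply: (leq_bigmax_cond _ iy').
move/eqP: ne => ne. lia.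
Qed.

Definition good d k (S x : {set 'I_d}) :=
  [/\ S \subset x, (forall i, i \in x :\: S -> (smax S < i.+1)%N) & (#|x| <= k)%N].

Lemma good_step d k (S x y : {set 'I_d}) :
  good k S x -> tree_edge k x y -> good k S y.
Proof.
case=> Sx gx xk /and4P [_ /andP [yk _] yn /eqP xy].
have xsy : x \subset y by rewrite xy; apply/subsetP => i; rewrite inE => /andP [].
split => //.
- exact: subset_trans xsy.
- move=> i; rewrite inE => /andP [iS iy].
  case ix: (i \in x); first by apply: gx; rewrite inE iS ix.
  move: ix; rewrite xy inE iy /= => /negbFE /eqP ->.
  have := smax_sub Sx; have := smax_drop yn; rewrite -xy; lia.
Qed.

Lemma desc_good d k (S T : {set 'I_d}) : inV k S -> T \in desc k S -> good k S T.
Proof.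
move=> /andP [Sk _]; rewrite inE => /connectP [p pth ->].
have g0 : good k S S by split => // i; rewrite setDv inE.
suff H : forall x, good k S x -> path (@tree_edge d k) x p -> good k S (last x p) by exact: H.
elim: p {pth} => [|y p IH] x gx //= /andP [e pth].
exact: IH (good_step gx e) pth.
Qed.

Lemma dot_trans (R : realFieldType) n d (A : 'M[R]_(n, d)) beta x :
  dotv beta (A *m x) = \sum_(i < d) (A^T *m beta) i 0 * x i 0.
Proof.
rewrite /dotv.
under eq_bigr do rewrite mxE big_distrr.
rewrite exchange_big; apply: eq_bigr => i _.
rewrite mxE big_distrl; apply: eq_bigr => j _.
rewrite !mxE /=; ring.
Qed.

Lemma quad_lb (R : realFieldType) (lam z x : R) : 0 < lam ->
  - ((2 * lam)^-1 * z ^+ 2) <= z * x + lam / 2 * x ^+ 2.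
Proof.
move=> lp.
have e : z * x + lam / 2 * x ^+ 2 + (2 * lam)^-1 * z ^+ 2 = (2 * lam)^-1 * (lam * x + z) ^+ 2.
  by field; rewrite gt_eqF.
have : 0 <= (2 * lam)^-1 * (lam * x + z) ^+ 2.
  by apply: mulr_ge0; [rewrite invr_ge0; lra | exact: sqr_ge0].
rewrite -e; lra.
Qed.

Theorem mainTheorem4 (R : realFieldType) (n d k : nat)
  (L : 'cV[R]_n -> R) (A : 'M[R]_(n, d)) (lam : R) :
  (0 < d)%N -> (0 < k)%N -> (k <= d)%N ->
  convex_fun L -> 0 < lam ->
  let P := fun x : 'cV[R]_d => L (A *m x) + lam / 2 * sqnorm x in
  forall (S : {set 'I_d}), inV k S ->
  forall (beta : 'cV[R]_n) (c : R), is_conj_value L beta c ->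
  let z := A^T *m beta in
  inf_ge P (inU k S)
    (- c - (2 * lam)^-1 * sqnorm_on S z
         - (2 * lam)^-1 * topsq (k - #|S|) (restr (Sgt S) z)).
Proof.
move=> _ _ _ _ lp P S HS beta c [hc _] z x [S' S'd supp].
have [SS' gS' S'k] := desc_good HS S'd.
have h1 := hc (A *m x).
rewrite dot_trans -/z in h1.
have h3 : - ((2 * lam)^-1 * \sum_(i in S') z i 0 ^+ 2)
          <= \sum_(i < d) z i 0 * x i 0 + lam / 2 * sqnorm x.
  rewrite /sqnorm [lam / 2 * _]mulr_sumr -big_split [(2 * lam)^-1 * _]mulr_sumr -sumrN big_mkcond /=.
  apply: ler_sum => i _.
  case iS: (i \in S'); first exact: quad_lb.
  have -> : x i 0 = 0.
    by apply/eqP; apply: contraFT iS => /supp.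
  by rewrite mulr0 expr0n /= mulr0 addr0.
have h4 : \sum_(i in S') z i 0 ^+ 2 <= sqnorm_on S z + topsq (k - #|S|) (restr (Sgt S) z).
  rewrite (big_setID S) /= (setIidPr SS') /sqnorm_on lerD2l.
  apply: topsq_sub.
  - by apply/subsetP => i /gS'; rewrite inE.
  - rewrite cardsD (setIidPr SS'). exact: leq_sub2r.
have inv0 : 0 <= (2 * lam)^-1 by rewrite invr_ge0; lra.
have h5 := ler_wpM2l inv0 h4.
rewrite mulrDr in h5.
rewrite /P; lra.
Qed.
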